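(* Let $R$ be an associative ring with identity and involution $*$, and let $a\in R^{\#}\cap R^{\dagger}$. Then $a\in R^{SEP}$ if and only if $a(a^{\#})^*a^{\dagger}$ and $a^{\dagger}a^2$ are left $a^{\dagger}a^2$-equivalent, i.e. $a^{\dagger}a^2\,a(a^{\#})^*a^{\dagger}=a^{\dagger}a^2\,a^{\dagger}a^2$.
   Context: An involution on $R$ is a map $x\mapsto x^*$ with $(x^* )^*=x$, $(x+y)^*=x^*+y^*$, $(xy)^*=y^*x^*$. An element $a$ is Moore–Penrose invertible if there is $b$ with $aba=a$, $bab=b$, $(ab)^*=ab$, $(ba)^*=ba$; such $b$ is unique, denoted $a^{\dagger}$, and $R^{\dagger}$ is the set of such $a$. An element $a$ is group invertible if there is $b$ with $aba=a$, $bab=b$, $ab=ba$; such $b$ is unique, denoted $a^{\#}$, and $R^{\#}$ is the set of such $a$. For $a\in R^{\#}\cap R^{\dagger}$, $a$ is SEP if $a^*=a^{\dagger}=a^{\#}$; $R^{SEP}$ denotes the set of SEP elements. For $x,b,c\in R$, $b$ and $c$ are left $x$-equivalent if $xb=xc$. *)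

(* Defs.v *)
From mathcomp Require Import all_boot all_algebra.
Set Implicit Arguments. Unset Strict Implicit. Unset Printing Implicit Defensive.
Import GRing.Theory.
Local Open Scope ring_scope.

Definition involution (R : pzRingType) (star : R -> R) : Prop :=
  (forall x, star (star x) = x) /\
  (forall x y, star (x + y) = star x + star y) /\
  (forall x y, star (x * y) = star y * star x).

Definition is_mp_inverse (R : pzRingType) (star : R -> R) (a b : R) : Prop :=
  a * b * a = a /\ b * a * b = b /\ star (a * b) = a * b /\ star (b * a) = b * a.

Definition is_group_inverse (R : pzRingType) (a b : R) : Prop :=
  a * b * a = a /\ b * a * b = b /\ a * b = b * a.

Definition is_SEP (R : pzRingType) (star : R -> R) (a adag asharp : R) : Prop :=
  star a = adag /\ star a = asharp.

Definition left_equiv (R : pzRingType) (x b c : R) : Prop := x * b = x * c.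

(* Main.v *)
Require Import Defs.
From mathcomp Require Import all_boot all_algebra.
Local Open Scope ring_scope.
Import GRing.Theory.

Theorem theorem5p3 (R : pzRingType) (star : R -> R) (a adag asharp : R) :
  involution star ->
  is_mp_inverse star a adag ->
  is_group_inverse a asharp ->
  is_SEP star a adag asharp <->
  left_equiv (adag * a ^+ 2) (a * star asharp * adag) (adag * a ^+ 2).
Proof.
move=> [sK [sD sM]] [h1 [h2 [h3 h4]]] [g1 [g2 g3]].
set d := adag in h1 h2 h3 h4 *; set g := asharp in g1 g2 g3 *.
clearbody d g.
rewrite /is_SEP /left_equiv expr2.
split.
- move=> [Ed Eg].
  have dg : d = g by rewrite -Ed -Eg.
  have com : a * d = d * a by rewrite dg.
  have cs x : x * a * d = x * d * a by rewrite -mulrA com mulrA.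
  rewrite -Eg sK !mulrA !cs.
  by [].
- move=> H.
  have gaa : g * a * a = a by rewrite -g3 g1.
  have ggaaa : g * g * a * a * a = a.
    by rewrite -(mulrA g g a) -(mulrA g _ a) gaa gaa.
  have ada x : x * a * d * a = x * a by rewrite -(mulrA x a d) -mulrA h1.
  have gg3 x : x * g * g * a * a * a = x * a.
    by rewrite -(mulrA x g g) -!mulrA; congr (_ * _); rewrite !mulrA.
  have st : a * star g * d = a.
    have e1 : g * g * a * (d * (a * a) * (a * star g * d)) = a * star g * d.
      by rewrite !mulrA ada ggaaa.
    rewrite -e1 H !mulrA !ada.
    by rewrite ggaaa.
  have dds' : d * (star d * star a) = d by rewrite -sM h3 mulrA h2.
  have sad : star a * a * d = star a by rewrite -mulrA -h3 -sM h1.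
  have e : a * star g * d * star d * star a = a by rewrite -!mulrA dds' !mulrA st.
  have aad : a * a * d = a.
    transitivity (a * star g * d * star d * (star a * a * d)).
      by rewrite !mulrA e.
    by rewrite sad e.
  have gad : g * a = a * d by rewrite -{1}aad !mulrA gaa.
  have e5 : g * a * (d * a) = g * a by rewrite mulrA ada.
  have aga x : x * a * g * a = x * a by rewrite -(mulrA x a g) -mulrA g1.
  have e6 : d * a * (g * a) = d * a by rewrite mulrA aga.
  have sga : star (g * a) = g * a by rewrite gad h3.
  have eqgd : g * a = d * a by rewrite -sga -{1}e5 sM h4 sga e6.
  have gd : g = d.
    transitivity (g * a * g); first by rewrite g2.
    by rewrite eqgd -mulrA g3 gad mulrA h2.
  rewrite gd in st.
  rewrite gd in gad.
  suff sa : star a = d by split; rewrite sa.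
  have c : a * d = d * a by rewrite -gad.
  have sd1 : star d = a * d * star d by rewrite -{1}h2 -mulrA sM h3.
  have sdd : star d * d = d * a.
    transitivity (d * a * star d * d); last by rewrite -!mulrA (mulrA a) st.
    by rewrite -c -sd1.
  by rewrite -sad -mulrA c -sdd mulrA -sM h4 h2.
Qed.
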